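(* $\mathsf{D}_0(C_2^4)=5$ and $k_{\mathsf{D}}(C_2^4)=3$. Additionally, $\mathsf{D}_{1}(C_2^4)=5$ and $\mathsf{D}_{2}(C_2^4)=8$.
   Context: $C_2^4$ is the elementary abelian $2$-group of rank $4$. A sequence over a finite abelian group $G$ is a finite unordered list of elements with repetitions; zero-sum means its terms sum to $0$. $\mathsf{D}_k(G)$ ($k\in\mathbb{N}$) is the smallest $\ell$ such that every sequence over $G$ of length at least $\ell$ has $k$ disjoint non-empty zero-sum subsequences. It is known that there exists $\mathsf{D}_0(G)\in\mathbb{N}_0$ with $\mathsf{D}_k(G)=\mathsf{D}_0(G)+k\exp(G)$ for all sufficiently large $k$; $k_{\mathsf{D}}(G)$ is the minimal $k_0\in\mathbb{N}$ with $\mathsf{D}_k(G)=\mathsf{D}_0(G)+k\exp(G)$ for all $k\ge k_0$. *)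

(* Defs.v *)
From mathcomp Require Import all_boot all_order all_algebra.
Set Implicit Arguments. Unset Strict Implicit. Unset Printing Implicit Defensive.
Import GRing.Theory.
Local Open Scope ring_scope.

(* Sequences over G are modelled as [seq G]; order is irrelevant in all
   notions below (everything is invariant under permutation). *)

Definition has_k_disjoint_zs (G : zmodType) (k : nat) (s : seq G) : Prop :=
  exists ss : seq (seq G),
    [/\ size ss = k,
        all (fun t => t != [::]) ss,
        all (fun t => \sum_(x <- t) x == 0) ss
      & exists r : seq G, perm_eq s (flatten ss ++ r)].

Definition Dk_bound (G : zmodType) (k l : nat) : Prop :=
  forall s : seq G, (l <= size s)%N -> has_k_disjoint_zs k s.

Definition is_Dk (G : zmodType) (k d : nat) : Prop :=
  Dk_bound G k d /\ forall l, Dk_bound G k l -> (d <= l)%N.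

Definition is_exp (G : zmodType) (e : nat) : Prop :=
  [/\ (0 < e)%N, (forall g : G, g *+ e = 0)
    & forall m, (0 < m)%N -> (forall g : G, g *+ m = 0) -> (e <= m)%N].

Definition eventually_linear_from (G : zmodType) (d0 e k0 : nat) : Prop :=
  forall k, (k0 <= k)%N -> is_Dk G k (d0 + k * e).

Definition is_D0 (G : zmodType) (d0 : nat) : Prop :=
  exists e, is_exp G e /\ exists k0, eventually_linear_from G d0 e k0.

Definition is_kD (G : zmodType) (k0 : nat) : Prop :=
  exists d0 e, [/\ is_D0 G d0, is_exp G e, (1 <= k0)%N,
    eventually_linear_from G d0 e k0
  & forall k1, (1 <= k1)%N -> eventually_linear_from G d0 e k1 -> (k0 <= k1)%N].

Definition C2_4 : zmodType := 'rV['Z_2]_4.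

(* Main.v *)
Require Import Defs.
From mathcomp Require Import all_boot all_order all_algebra.
From Stdlib Require Import PeanoNat.
From mathcomp Require Import zify.
Set Implicit Arguments. Unset Strict Implicit. Unset Printing Implicit Defensive.
Import GRing.Theory.
Local Open Scope ring_scope.

Lemma psym (T : eqType) (a b : seq T) : perm_eq a b -> perm_eq b a.
Proof. by rewrite perm_sym. Qed.
Lemma pCA (T : eqType) (a b c : seq T) : perm_eq (a ++ b ++ c) (b ++ a ++ c).
Proof. by rewrite (perm_catCA a b c (b ++ a ++ c)) perm_refl. Qed.

Lemma where_in (T : eqType) (g : T) (s t u : seq T) : perm_eq (g :: s) (t ++ u) ->
  (exists t', perm_eq t (g :: t') /\ perm_eq s (t' ++ u)) \/
  (exists u', perm_eq u (g :: u') /\ perm_eq s (t ++ u')).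
Proof.
move=> H.
have : g \in t ++ u by rewrite -(perm_mem H) mem_head.
rewrite mem_cat => /orP[gt|gu].
  left; exists (rem g t); split; first exact: perm_to_rem.
  rewrite -(perm_cons g) (perm_trans H) //.
  by rewrite -cat_cons perm_cat2r perm_to_rem.
right; exists (rem g u); split; first exact: perm_to_rem.
rewrite -(perm_cons g) (perm_trans H) //.
apply: (perm_trans (y := t ++ [:: g] ++ rem g u)); first by rewrite perm_cat2l perm_to_rem.
exact: pCA.
Qed.

Section Generic.
Variable G : zmodType.
Implicit Types s t u : seq G.
Local Notation hz := (@has_k_disjoint_zs G).

Lemma hz_perm k s s' : perm_eq s s' -> hz k s -> hz k s'.
Proof.
move=> pss [ss [H1 H2 H3 [r pr]]]; exists ss; split=> //; exists r.
exact: perm_trans (psym pss) pr.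
Qed.

Lemma hz0 s : hz 0 s.
Proof. by exists [::]; split=> //; exists s. Qed.

Lemma hz_succ k s : hz k.+1 s <->
  exists t u, [/\ t != [::], \sum_(x <- t) x == 0, perm_eq s (t ++ u) & hz k u].
Proof.
split.
  case=> ss [Hs Hne Hz [r pr]]; case: ss Hs Hne Hz pr => [//|t ss] [H1].
  move=> /= /andP[Ht H2] /andP[Ht' H3] pr.
  exists t, (flatten ss ++ r); split=> //; first by rewrite catA.
  by exists ss; split=> //; exists r.
case=> t [u [Ht Ht' pu [ss [H1 H2 H3 [r pr]]]]].
exists (t :: ss); split=> /=; rewrite ?H1 ?Ht ?Ht' //; exists r.
by rewrite -catA (perm_trans pu) // perm_cat2l.
Qed.

Lemma hz_catr k s t : hz k s -> hz k (s ++ t).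
Proof.
move=> [ss [H1 H2 H3 [r pr]]]; exists ss; split=> //; exists (r ++ t).
by rewrite catA perm_cat2r.
Qed.

Lemma hz_catl k s t : hz k s -> hz k (t ++ s).
Proof. by move=> /(hz_catr t); apply: hz_perm; rewrite perm_catC. Qed.

Lemma hz_cat a b s1 s2 : hz a s1 -> hz b s2 -> hz (a + b) (s1 ++ s2).
Proof.
elim: a s1 => [|a IH] s1 h1 h2; first by rewrite add0n; apply: hz_catl.
case/hz_succ: h1 => t [u [Ht Ht' pu hu]].
apply/hz_succ; exists t, (u ++ s2); split=> //; last exact: IH.
by rewrite catA perm_cat2r.
Qed.

Hypothesis G2 : forall x : G, x + x = 0.

Lemma oppG (x : G) : - x = x.
Proof. by apply/eqP; rewrite eq_sym -addr_eq0 G2. Qed.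

Lemma sum_cons_perm (g : G) t t' : perm_eq t (g :: t') ->
  \sum_(x <- t) x = g + \sum_(x <- t') x.
Proof. by move=> p; rewrite (perm_big _ p) big_cons. Qed.

Lemma sum_cat (t u : seq G) : \sum_(x <- t ++ u) x = \sum_(x <- t) x + \sum_(x <- u) x.
Proof. by rewrite big_cat. Qed.

Variable g : G.
Hypothesis g0 : g != 0.

Lemma sum_g t t' : \sum_(x <- t) x == 0 -> perm_eq t (g :: t') -> \sum_(x <- t') x = g.
Proof.
move=> /eqP h p; move: h; rewrite (sum_cons_perm p) => /eqP.
by rewrite addr_eq0 oppG => /eqP ->.
Qed.

Lemma Qlem k u' t' : \sum_(x <- t') x = g -> hz k (g :: u') -> hz k (t' ++ u').
Proof.
elim: k u' t' => [|k IH] u' t' st h; first exact: hz0.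
case/hz_succ: h => v [w [Hv Hv' pw hw]].
case: (where_in pw) => [[v' [pv pu]]|[w' [pw' pu]]].
  have sv := sum_g Hv' pv.
  apply/hz_succ; exists (t' ++ v'), w; split => //.
  - by case: t' st => //= st; move: g0; rewrite -st big_nil eqxx.
  - by rewrite sum_cat st sv G2.
  - by rewrite -catA perm_cat2l.
have := IH w' t' st (hz_perm pw' hw) => h2.
apply/hz_succ; exists v, (t' ++ w'); split=> //.
apply: (perm_trans (y := t' ++ v ++ w')); first by rewrite perm_cat2l.
exact: pCA.
Qed.

Lemma Plem k s : hz k.+1 (g :: g :: s) -> hz k s.
Proof.
elim: k s => [|k IH] s h; first exact: hz0.
case/hz_succ: h => t [u [Ht Ht' pu hu]].
case: (where_in pu) => [[t1 [pt1 ps1]]|[u1 [pu1 ps1]]];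
  case: (where_in ps1) => [[t2 [pt2 ps2]]|[u2 [pu2 ps2]]].
- apply: hz_perm (psym ps2) _; exact: hz_catl.
- have st1 := sum_g Ht' pt1.
  apply: hz_perm (psym ps2) _; apply: Qlem st1 _; exact: hz_perm pu2 hu.
- have st2 := sum_g Ht' pt2.
  apply: hz_perm (psym ps2) _; apply: Qlem st2 _; exact: hz_perm pu1 hu.
- have h1 : hz k.+1 (g :: g :: u2).
    by apply: hz_perm (hz_perm pu1 hu); rewrite perm_cons.
  move: h1; move/IH => h2; apply: hz_perm (psym ps2) _.
  by apply/hz_succ; exists t, u2.
Qed.
End Generic.

Definition enc (n : nat) : C2_4 := \row_(i < 4) ((Nat.testbit n i)%:R : 'Z_2).

Lemma Z2_xor (a b : bool) : ((xorb a b)%:R : 'Z_2) = a%:R + b%:R.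
Proof. by case: a; case: b; apply/val_inj. Qed.

Lemma enc_xor a b : enc (Nat.lxor a b) = enc a + enc b.
Proof. by apply/rowP => i; rewrite !mxE Nat.lxor_spec Z2_xor. Qed.

Lemma enc0 : enc 0 = 0.
Proof. by apply/rowP => i; rewrite !mxE Nat.bits_0. Qed.

Lemma C2_G2 (x : C2_4) : x + x = 0.
Proof.
apply/rowP => i; rewrite !mxE.
by case: (x 0 i) => -[|[|//]] ?; apply/val_inj.
Qed.

Definition xorl (l : seq nat) := foldr Nat.lxor 0%N l.

Lemma sum_enc l : \sum_(x <- map enc l) x = enc (xorl l).
Proof.
elim: l => [|a l IH]; first by rewrite big_nil enc0.
by rewrite /= big_cons IH enc_xor.
Qed.

Definition z4 n := ~~ Nat.testbit n 0 && ~~ Nat.testbit n 1 &&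
                   ~~ Nat.testbit n 2 && ~~ Nat.testbit n 3.

Lemma enc_eq0 n : (enc n == 0) = z4 n.
Proof.
apply/eqP/idP.
  move/rowP => h; rewrite /z4.
  have hb : forall i : 'I_4, Nat.testbit n i = false.
    move=> i; move: (h i); rewrite !mxE.
    by case: (Nat.testbit n i) => // /(congr1 val).
  by rewrite (hb 0) (hb 1) (hb 2) (hb 3).
rewrite /z4 => /andP[/andP[/andP[h0 h1] h2] h3].
apply/rowP => -[[|[|[|[|//]]]] Hi]; rewrite !mxE.
- by rewrite (negbTE h0).
- by rewrite (negbTE h1).
- by rewrite (negbTE h2).
- by rewrite (negbTE h3).
Qed.

Definition dec (g : C2_4) : nat :=
  ((g ord0 (inord 0) != 0%R) + 2 * (g ord0 (inord 1) != 0%R) + 4 * (g ord0 (inord 2) != 0%R)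
   + 8 * (g ord0 (inord 3) != 0%R))%N.

Lemma Z2_b (x : 'Z_2) : x = (x != 0)%:R.
Proof. by case: x => -[|[|//]] ?; apply/val_inj. Qed.

Lemma bits_key (b0 b1 b2 b3 : bool) (i : nat) : (i < 4)%N ->
  Nat.testbit (b0 + 2 * b1 + 4 * b2 + 8 * b3)%N i = nth false [:: b0; b1; b2; b3] i.
Proof. by case: b0; case: b1; case: b2; case: b3; case: i => [|[|[|[|]]]]. Qed.

Lemma encK g : enc (dec g) = g.
Proof.
apply/rowP => i; rewrite mxE /dec bits_key // [RHS]Z2_b.
congr (_ %:R); case: i => -[|[|[|[|//]]]] Hi /=;
by congr (g ord0 _ != 0); apply/val_inj; rewrite /= inordK.
Qed.

Lemma lt16 (b0 b1 b2 b3 : bool) : (b0 + 2 * b1 + 4 * b2 + 8 * b3 < 16)%N.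
Proof. by case: b0; case: b1; case: b2; case: b3. Qed.

Lemma dec_lt g : (dec g < 16)%N.
Proof. exact: lt16. Qed.

Lemma dec_mem g : g != 0 -> dec g \in iota 1 15.
Proof.
move=> g0; rewrite mem_iota dec_lt andbT lt0n.
by apply: contra g0 => /eqP h; rewrite -[g]encK h enc0.
Qed.

Fixpoint splits (l : seq nat) : seq (seq nat * seq nat) :=
  match l with
  | [::] => [:: ([::], [::])]
  | a :: l' => let S := splits l' in
      [seq (a :: x.1, x.2) | x <- S] ++ [seq (x.1, a :: x.2) | x <- S]
  end.

Fixpoint checkN (k : nat) (l : seq nat) : bool :=
  match k with
  | 0 => true
  | k'.+1 => has (fun x => (x.1 != [::]) && z4 (xorl x.1) && checkN k' x.2) (splits l)
  end.

Lemma splits_perm l x : x \in splits l -> perm_eq l (x.1 ++ x.2).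
Proof.
elim: l x => [|a l IH] x /=; first by rewrite inE => /eqP ->.
rewrite mem_cat => /orP[] /mapP[y /IH py ->] /=; first by rewrite perm_cons.
apply: (perm_trans (y := a :: y.1 ++ y.2)); first by rewrite perm_cons.
exact: (pCA [:: a] y.1 y.2).
Qed.

Lemma splits_complete (G : eqType) (f : nat -> G) l t u :
  perm_eq (map f l) (t ++ u) ->
  exists2 x, x \in splits l & perm_eq (map f x.1) t /\ perm_eq (map f x.2) u.
Proof.
elim: l t u => [|a l IH] t u /= p.
  have [-> ->] : t = [::] /\ u = [::].
    by move/perm_size: p; case: t; case: u.
  by exists ([::], [::]); rewrite ?mem_head.
case: (where_in p) => [[t' [pt pl]]|[u' [pu pl]]].
  case: (IH _ _ pl) => x xi [p1 p2]; exists (a :: x.1, x.2).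
    by rewrite mem_cat map_f.
  split=> //=; apply: (perm_trans (y := f a :: t')); first by rewrite perm_cons.
  by rewrite perm_sym.
case: (IH _ _ pl) => x xi [p1 p2]; exists (x.1, a :: x.2).
  by rewrite mem_cat map_f ?orbT.
split=> //=; apply: (perm_trans (y := f a :: u')); first by rewrite perm_cons.
by rewrite perm_sym.
Qed.

Local Notation hz := (@has_k_disjoint_zs C2_4).

Lemma checkN_sound k l : checkN k l -> hz k (map enc l).
Proof.
elim: k l => [|k IH] l /=; first by move=> _; exact: hz0.
case/hasP=> x xi /andP[/andP[ne z] c].
apply/hz_succ; exists (map enc x.1), (map enc x.2); split.
- by case: (x.1) ne.
- by rewrite sum_enc enc_eq0.
- by rewrite -map_cat perm_map // splits_perm.
- exact: IH.
Qed.

Lemma checkN_complete k l : hz k (map enc l) -> checkN k l.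
Proof.
elim: k l => [//|k IH] l /hz_succ [t [u [ne z p h]]] /=.
case: (splits_complete p) => x xi [p1 p2].
apply/hasP; exists x => //; apply/andP; split; first (apply/andP; split).
- apply: contraTneq ne => e; move/perm_size: p1; rewrite e /=.
  by case: (t) => //.
- by rewrite -enc_eq0 -sum_enc (perm_big _ p1).
- by apply: IH; apply: hz_perm h; rewrite perm_sym.
Qed.

Fixpoint combs (n : nat) (l : seq nat) : seq (seq nat) :=
  match n, l with
  | 0, _ => [:: [::]]
  | _.+1, [::] => [::]
  | n'.+1, a :: l' => [seq a :: c | c <- combs n' l'] ++ combs n l'
  end.

Lemma combs_subseq U A : subseq A U -> A \in combs (size A) U.
Proof.
elim: U A => [|a U IH] [|b A] //=; try by rewrite mem_head.
case: eqP => [-> /IH h|_ /IH h]; rewrite mem_cat.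
  by rewrite map_f.
by rewrite h orbT.
Qed.

Local Open Scope nat_scope.

Definition hasL {T : Type} (p : T -> bool) :=
  fix hasL (s : seq T) : bool :=
  match s with
  | [::] => false
  | x :: s' => if p x then true else hasL s'
  end.

Definition XT : seq (seq nat) := [:: [:: 0; 1; 2; 3; 4; 5; 6; 7; 8; 9; 10; 11; 12; 13; 14; 15];
 [:: 1; 0; 3; 2; 5; 4; 7; 6; 9; 8; 11; 10; 13; 12; 15; 14];
 [:: 2; 3; 0; 1; 6; 7; 4; 5; 10; 11; 8; 9; 14; 15; 12; 13];
 [:: 3; 2; 1; 0; 7; 6; 5; 4; 11; 10; 9; 8; 15; 14; 13; 12];
 [:: 4; 5; 6; 7; 0; 1; 2; 3; 12; 13; 14; 15; 8; 9; 10; 11];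
 [:: 5; 4; 7; 6; 1; 0; 3; 2; 13; 12; 15; 14; 9; 8; 11; 10];
 [:: 6; 7; 4; 5; 2; 3; 0; 1; 14; 15; 12; 13; 10; 11; 8; 9];
 [:: 7; 6; 5; 4; 3; 2; 1; 0; 15; 14; 13; 12; 11; 10; 9; 8];
 [:: 8; 9; 10; 11; 12; 13; 14; 15; 0; 1; 2; 3; 4; 5; 6; 7];
 [:: 9; 8; 11; 10; 13; 12; 15; 14; 1; 0; 3; 2; 5; 4; 7; 6];
 [:: 10; 11; 8; 9; 14; 15; 12; 13; 2; 3; 0; 1; 6; 7; 4; 5];
 [:: 11; 10; 9; 8; 15; 14; 13; 12; 3; 2; 1; 0; 7; 6; 5; 4];
 [:: 12; 13; 14; 15; 8; 9; 10; 11; 4; 5; 6; 7; 0; 1; 2; 3];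
 [:: 13; 12; 15; 14; 9; 8; 11; 10; 5; 4; 7; 6; 1; 0; 3; 2];
 [:: 14; 15; 12; 13; 10; 11; 8; 9; 6; 7; 4; 5; 2; 3; 0; 1];
 [:: 15; 14; 13; 12; 11; 10; 9; 8; 7; 6; 5; 4; 3; 2; 1; 0]].

Definition lx (a b : nat) : nat := nth (Nat.lxor a b) (nth [::] XT a) b.

Lemma XT_ok : all (fun a => all (fun b => nth 0 (nth [::] XT a) b == Nat.lxor a b)
  (iota 0 16)) (iota 0 16) && (size XT == 16) && all (fun r => size r == 16) XT.
Proof. vm_compute. reflexivity. Qed.

Lemma lxE a b : lx a b = Nat.lxor a b.
Proof.
move: XT_ok => /andP[/andP[/allP H /eqP sX] /allP sR]; rewrite /lx.
case: (ltnP a 16) => ha; last by rewrite (nth_default [::]) ?sX // nth_nil.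
have rin : nth [::] XT a \in XT by rewrite mem_nth ?sX.
case: (ltnP b 16) => hb; last by rewrite nth_default // (eqP (sR _ rin)).
have := H a; rewrite mem_iota ha => /(_ isT) /allP /(_ b).
rewrite mem_iota hb => /(_ isT) /eqP <-.
by apply: set_nth_default; rewrite (eqP (sR _ rin)).
Qed.

Fixpoint splitsE (m : nat) (l : seq nat) : seq (nat * (seq nat * seq nat)) :=
  match l with
  | [::] => if m is 0 then [:: (0, ([::], [::]))] else [::]
  | a :: l' =>
      (if m is m'.+1 then [seq (lx a x.1, (a :: x.2.1, x.2.2)) | x <- splitsE m' l'] else [::])
      ++ [seq (x.1, (x.2.1, a :: x.2.2)) | x <- splitsE m l']
  end.

Fixpoint checkT (ms : seq nat) (k : nat) (l : seq nat) : bool :=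
  match k with
  | 0 => true
  | k'.+1 =>
    let fix go (l : seq nat) : bool :=
      match l with
      | [::] => false
      | a :: l' =>
        if (size l < 3 * k)%N then false else
        if hasL (fun m => hasL (fun x => if lx a x.1 == 0 then checkT ms k' x.2.2 else false)
                                (splitsE m l')) ms
        then true else go l'
      end in go l
  end.

Local Open Scope ring_scope.


Lemma splitsE_inv m l x : x \in splitsE m l ->
  x.1 = xorl x.2.1 /\ perm_eq l (x.2.1 ++ x.2.2).
Proof.
elim: l m x => [|a l IH] m x /=.
  by case: m => //; rewrite inE => /eqP ->.
rewrite mem_cat => /orP[].
  case: m => // m /mapP[y /IH [py1 py2] ->] /=.
  by rewrite lxE py1 perm_cons.
move=> /mapP[y /IH [py1 py2] ->] /=; split=> //.
apply: (perm_trans (y := a :: y.2.1 ++ y.2.2)); first by rewrite perm_cons.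
exact: (pCA [:: a] y.2.1 y.2.2).
Qed.

Lemma hasLP (T : eqType) (p : T -> bool) s : hasL p s -> exists2 x, x \in s & p x.
Proof.
elim: s => [//|x s IH] /=; case px: (p x) => /= h.
  by exists x; rewrite ?mem_head.
have [y ys py] := IH h.
by exists y; rewrite // inE ys orbT.
Qed.

Lemma checkT_cons ms k a l : checkT ms k.+1 (a :: l) =
  if (size (a :: l) < 3 * k.+1)%N then false else
  if hasL (fun m => hasL (fun x => if lx a x.1 == 0 then checkT ms k x.2.2 else false)
                          (splitsE m l)) ms
  then true else checkT ms k.+1 l.
Proof. by []. Qed.

Lemma checkT_sound ms k l : checkT ms k l -> hz k (map enc l).
Proof.
elim: k l => [|k IH] l; first by move=> _; exact: hz0.
elim: l => [//|a l IHl]; rewrite checkT_cons; case: ifP => // _.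
case h: hasL => /= hl; last exact: (hz_catl [:: enc a] (IHl hl)).
case/hasLP: h => m _ /hasLP [x xi]; case z: (lx a x.1 == 0) => // c.
have [x1 px] := splitsE_inv xi.
apply/hz_succ; exists (map enc (a :: x.2.1)), (map enc x.2.2); split.
- by [].
- by rewrite sum_enc enc_eq0 /= -lxE -x1 (eqP z).
- rewrite -map_cat; apply: (perm_map enc (s := a :: l)).
  by rewrite /= perm_cons.
- exact: IH.
Qed.

Lemma fin_gen ms k n : all (checkT ms k) (combs n (iota 1 15)) -> forall l, uniq l ->
  {subset l <= iota 1 15} -> (n <= size l)%N -> hz k (map enc l).
Proof.
move=> /allP H l ul sl nl.
set t := take n l; set A := filter (mem t) (iota 1 15).
have pA : perm_eq A t.
  apply: uniq_perm; first exact: filter_uniq (iota_uniq _ _).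
    exact: take_uniq.
  move=> x; rewrite mem_filter /=; case xt: (x \in t) => //=.
  by apply: sl; apply: mem_take xt.
have sA : size A = n by rewrite (perm_size pA) size_takel.
have Ai : A \in combs n (iota 1 15).
  by rewrite -sA; apply: combs_subseq; apply: filter_subseq.
have := checkT_sound (H _ Ai); move/(hz_perm (perm_map enc pA)).
move/(hz_catr (map enc (drop n l))).
by rewrite -map_cat cat_take_drop.
Qed.

Lemma F1 : all (checkT [:: 2; 3; 4] 1) (combs 5 (iota 1 15)). Proof. vm_compute. reflexivity. Qed.
Lemma F2 : all (checkT [:: 2; 3; 4] 2) (combs 8 (iota 1 15)). Proof. vm_compute. reflexivity. Qed.
Lemma F3 : all (checkT [:: 2; 3; 4] 3) (combs 11 (iota 1 15)). Proof. vm_compute. reflexivity. Qed.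
Lemma F4 : all (checkT [:: 2] 4) (combs 13 (iota 1 15)). Proof. vm_compute. reflexivity. Qed.
Lemma F5 : all (checkT [:: 2] 5) (combs 15 (iota 1 15)). Proof. vm_compute. reflexivity. Qed.

Definition L (k : nat) : nat :=
  match k with 0 => 0 | 1 => 5 | 2 => 8 | _ => 2 * k + 5 end.

Lemma Lstep k : (L k + 2 <= L k.+1)%N.
Proof. case: k => [|[|[|k]]] //=; lia. Qed.

Lemma fin_C k s : uniq s -> 0 \notin s -> (L k <= size s)%N -> hz k s.
Proof.
move=> us s0 Ls.
have es : s = map enc (map dec s).
  by rewrite -map_comp -[LHS]map_id; apply: eq_map => x /=; rewrite encK.
rewrite es; rewrite es in us s0 Ls; rewrite size_map in Ls.
set l := map dec s in us s0 Ls *.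
have ul : uniq l by move: us; apply: map_uniq.
have sl : {subset l <= iota 1 15}.
  move=> x /mapP[y ys ->]; apply: dec_mem.
  by apply: contraNneq s0 => e; rewrite -e -es.
case: k Ls => [|[|[|[|[|[|k]]]]]] Ls.
- exact: hz0.
- exact: fin_gen F1 _ ul sl Ls.
- exact: fin_gen F2 _ ul sl Ls.
- exact: fin_gen F3 _ ul sl Ls.
- exact: fin_gen F4 _ ul sl Ls.
- exact: fin_gen F5 _ ul sl Ls.
have := uniq_leq_size ul sl; rewrite size_iota => h.
by have := leq_trans Ls h; rewrite /L; lia.
Qed.

Lemma dup_ex (T : eqType) (s : seq T) : ~~ uniq s -> exists x s', perm_eq s (x :: x :: s').
Proof.
elim: s => [//|a s IH] /=; rewrite negb_and negbK.
case: (boolP (a \in s)) => [as_|_] /= h.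
  by exists a, (rem a s); rewrite perm_cons; apply: perm_to_rem.
have [x [s' p]] := IH h; exists x, (a :: s').
apply: (perm_trans (y := a :: x :: x :: s')); first by rewrite perm_cons.
exact: (pCA [:: a] [:: x; x] s').
Qed.

Lemma upper n : forall k (s : seq C2_4), (size s < n)%N -> (L k <= size s)%N -> hz k s.
Proof.
elim: n => [//|n IH] k s Hs HL.
case: k HL => [|k] HL; first exact: hz0.
have Lk := Lstep k.
case: (boolP (0 \in s)) => [s0|s0].
  have p := perm_to_rem s0; apply: hz_perm (psym p) _.
  have h1 : hz 1 [:: 0].
    apply/hz_succ; exists [:: 0], [::]; split => //; last exact: hz0.
    by rewrite big_seq1.
  have h2 : hz k (rem 0 s).
    apply: IH; rewrite size_rem //; move: Hs HL Lk; case: (size s) => [|m] /=; lia.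
  exact: (hz_cat h1 h2).
case: (boolP (uniq s)) => [us|nus]; first exact: fin_C.
have [x [s' p]] := dup_ex nus; apply: hz_perm (psym p) _.
have h1 : hz 1 [:: x; x].
  apply/hz_succ; exists [:: x; x], [::]; split => //; last exact: hz0.
  by rewrite big_cons big_seq1 C2_G2.
have sz := perm_size p; rewrite /= in sz.
have h2 : hz k s'.
  apply: IH; first by rewrite -ltnS -sz; apply: ltnW.
  rewrite -(leq_add2r 2) (_ : size s' + 2 = size s)%N; last by rewrite sz addn2.
  exact: leq_trans Lk HL.
exact: (hz_cat h1 h2).
Qed.


Lemma bound_of k : (0 < k)%N -> Dk_bound C2_4 k (L k).
Proof. by move=> _ s Hs; apply: (upper (n := (size s).+1)). Qed.

Lemma isDk_of k d : Dk_bound C2_4 k d -> forall w : seq C2_4,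
  size w = d.-1 -> ~ hz k w -> (0 < d)%N -> is_Dk C2_4 k d.
Proof.
move=> ub w sw nw d0; split => // l ubl.
rewrite leqNgt; apply/negP => ld; apply: nw; apply: ubl.
by rewrite sw; move: ld d0; lia.
Qed.

Lemma N1 : checkN 1 [:: 1; 2; 4; 8]%N = false. Proof. vm_compute. reflexivity. Qed.
Lemma N2 : checkN 2 [:: 1; 2; 3; 4; 5; 6; 8]%N = false. Proof. vm_compute. reflexivity. Qed.
Lemma N3 : checkN 3 (iota 1 10) = false. Proof. vm_compute. reflexivity. Qed.

Lemma enc1 : enc 1 != 0.
Proof. by rewrite enc_eq0. Qed.

Lemma noth m : ~ hz (m + 3) (nseq m.*2 (enc 1) ++ map enc (iota 1 10)).
Proof.
elim: m => [|m IH]; first by move=> h; have := checkN_complete (k := 3) (l := iota 1 10) h; rewrite N3.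
move=> h; apply: IH; apply: (Plem C2_G2 enc1).
by rewrite -addSn.
Qed.

Lemma isDk1 : is_Dk C2_4 1 5.
Proof.
apply: (isDk_of (bound_of (k := 1) _) (w := map enc [:: 1; 2; 4; 8]%N)) => //.
by move=> h; have := checkN_complete (k := 1) (l := [:: 1; 2; 4; 8]%N) h; rewrite N1.
Qed.

Lemma isDk2 : is_Dk C2_4 2 8.
Proof.
apply: (isDk_of (bound_of (k := 2) _) (w := map enc [:: 1; 2; 3; 4; 5; 6; 8]%N)) => //.
by move=> h; have := checkN_complete (k := 2) (l := [:: 1; 2; 3; 4; 5; 6; 8]%N) h; rewrite N2.
Qed.

Lemma isDkk k : (3 <= k)%N -> is_Dk C2_4 k (5 + k * 2).
Proof.
move=> k3.
have eL : L k = (5 + k * 2)%N by case: k k3 => [|[|[|k]]] //= _; lia.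
apply: (isDk_of (d := (5 + k * 2)%N) _ (w := nseq (k - 3).*2 (enc 1) ++ map enc (iota 1 10))).
- rewrite -eL; apply: bound_of; lia.
- rewrite size_cat size_nseq size_map size_iota -mul2n; lia.
- by have := @noth (k - 3); rewrite subnK.
- by [].
Qed.

Lemma exp2 : is_exp C2_4 2.
Proof.
split => // [g|m m0 h]; first by rewrite mulr2n C2_G2.
case: m m0 h => [|[|m]] // _ h.
by move: enc1; rewrite -(h (enc 1)) mulr1n eqxx.
Qed.

Lemma lin3 : eventually_linear_from C2_4 5 2 3.
Proof. exact: isDkk. Qed.

Theorem theorem7p9 :
  [/\ is_D0 C2_4 5, is_kD C2_4 3, is_Dk C2_4 1 5 & is_Dk C2_4 2 8].
Proof.
have D0 : is_D0 C2_4 5 by exists 2%N; split; [exact: exp2 | exists 3%N; exact: lin3].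
split; [exact: D0 | | exact: isDk1 | exact: isDk2].
exists 5%N, 2%N; split => //; [exact: exp2 | exact: lin3 | move=> k1 k1p lin].
rewrite leqNgt; apply/negP => k1s.
have k2 : (k1 <= 2)%N by move: k1s; lia.
have h9 := lin 2%N k2.
case: h9 => _ /(_ 8%N); case: isDk2 => b _.
by move/(_ b).
Qed.
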